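(* Let $H,K$ be groups, $G=H\times K$, and $\phi\in\operatorname{End}(G)$ with $\phi(h,k)=(\alpha(h)\beta(k),\delta(k))$, where $\alpha\in\operatorname{End}(H)$, $\beta\in\operatorname{Hom}(K,H)$ with $[\operatorname{im}\alpha,\operatorname{im}\beta]=1$, and $\delta\in\operatorname{End}(K)$. Let $\{k_j\}_{j\in\mathcal J}$ be a set of representatives of the $\delta$-conjugacy classes of $K$. For each $j$, the twisted stabiliser $\operatorname{Stab}_\delta(k_j)$ acts on the right on the set $\mathcal R[\alpha]$ of $\alpha$-conjugacy classes of $H$ by $([h]_\alpha,y)\mapsto[h\beta(y)]_\alpha$; let $r_j$ be the number of orbits of this action. Then $R(\phi)=\sum_{j\in\mathcal J}r_j$, where an infinite sum, or a sum having some term equal to $\infty$, is interpreted as $\infty$.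
   Context: For an endomorphism $\psi$ of a group $A$, $x,y\in A$ are $\psi$-conjugate if $x=gy\psi(g)^{-1}$ for some $g\in A$; $[x]_\psi$ is the class of $x$, $\mathcal R[\psi]$ the set of classes and $R(\psi)=|\mathcal R[\psi]|\in\mathbb{N}\cup\{\infty\}$. The $\psi$-stabiliser (twisted stabiliser) of $a\in A$ is the subgroup $\operatorname{Stab}_\psi(a)=\{b\in A\mid a=ba\psi(b)^{-1}\}$. *)

(* Defs.v *)
From Stdlib Require Import List Arith ClassicalEpsilon.
Import ListNotations.

Record group := Group {
  gcar :> Type;
  gmul : gcar -> gcar -> gcar;
  gone : gcar;
  ginv : gcar -> gcar;
  gmulA : forall x y z, gmul x (gmul y z) = gmul (gmul x y) z;
  gmul1 : forall x, gmul gone x = x;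
  gmulV : forall x, gmul (ginv x) x = gone
}.
Arguments gmul {g}.
Arguments gone {g}.
Arguments ginv {g}.

Definition is_hom (A B : group) (f : A -> B) : Prop :=
  forall x y, f (gmul x y) = gmul (f x) (f y).

Section Prod.
Variables H K : group.
Definition pmul (x y : gcar H * gcar K) : gcar H * gcar K :=
  (gmul (fst x) (fst y), gmul (snd x) (snd y)).
Definition pinv (x : gcar H * gcar K) : gcar H * gcar K :=
  (ginv (fst x), ginv (snd x)).
Lemma pmulA x y z : pmul x (pmul y z) = pmul (pmul x y) z.
Proof. destruct x, y, z; unfold pmul; simpl; rewrite !gmulA; reflexivity. Qed.
Lemma pmul1 x : pmul (gone, gone) x = x.
Proof. destruct x; unfold pmul; simpl; rewrite !gmul1; reflexivity. Qed.
Lemma pmulV x : pmul (pinv x) x = (gone, gone).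
Proof. destruct x; unfold pmul, pinv; simpl; rewrite !gmulV; reflexivity. Qed.
Definition prod_group : group :=
  Group (gcar H * gcar K) pmul (gone, gone) pinv pmulA pmul1 pmulV.
End Prod.

Definition tconj (A : group) (psi : A -> A) (x y : A) : Prop :=
  exists g : A, x = gmul (gmul g y) (ginv (psi g)).

Definition tstab (A : group) (psi : A -> A) (a : A) : A -> Prop :=
  fun b => a = gmul (gmul b a) (ginv (psi b)).

Inductive enat := Fin (n : nat) | Inf.

Definition has_n_classes (X : Type) (E : X -> X -> Prop) (n : nat) : Prop :=
  exists l : list X, length l = n /\
    ForallOrdPairs (fun a b => ~ E a b) l /\
    (forall x, exists y, In y l /\ E x y).

Definition nclasses (X : Type) (E : X -> X -> Prop) : enat :=
  match excluded_middle_informative (exists n, has_n_classes X E n) with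
  | left h => Fin (proj1_sig (constructive_indefinite_description _ h))
  | right _ => Inf
  end.

Definition reidemeister (A : group) (psi : A -> A) : enat :=
  nclasses (gcar A) (tconj A psi).

Definition efin (e : enat) : nat := match e with Fin n => n | Inf => 0 end.

Definition esum (J : Type) (r : J -> enat) : enat :=
  match excluded_middle_informative
          ((exists l : list J, NoDup l /\ forall j, In j l) /\
           (forall j, r j <> Inf)) with
  | left h =>
      let l := proj1_sig (constructive_indefinite_description _ (proj1 h)) in
      Fin (fold_right (fun j s => efin (r j) + s) 0 l)
  | right _ => Inf
  end.

(* Main.v *)
Require Import Defs.
From Stdlib Require Import List Arith Lia Classical ClassicalEpsilon.
Import ListNotations.

Section G.
Context {A : group}.

Lemma mulKg (x y : A) : gmul (ginv x) (gmul x y) = y.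
Proof. rewrite gmulA, gmulV, gmul1. reflexivity. Qed.

Lemma mulg_idem_one (e : A) : gmul e e = e -> e = gone.
Proof.
  intros Hi. transitivity (gmul (ginv e) (gmul e e)).
  { symmetry; apply mulKg. }
  rewrite Hi; apply gmulV.
Qed.

Lemma mulgV (x : A) : gmul x (ginv x) = gone.
Proof.
  apply mulg_idem_one. rewrite <- gmulA, mulKg. reflexivity.
Qed.

Lemma mulg1 (x : A) : gmul x gone = x.
Proof. rewrite <- (gmulV A x), gmulA, mulgV, gmul1. reflexivity. Qed.

Lemma inv_uniq (x y : A) : gmul x y = gone -> y = ginv x.
Proof.
  intros Hxy. transitivity (gmul (ginv x) (gmul x y)).
  { symmetry; apply mulKg. }
  rewrite Hxy, mulg1. reflexivity.
Qed.

Lemma mulgKV (w x : A) : gmul (gmul w x) (ginv x) = w.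
Proof. rewrite <- gmulA, mulgV, mulg1. reflexivity. Qed.

Lemma mulgVK (w x : A) : gmul (gmul w (ginv x)) x = w.
Proof. rewrite <- gmulA, gmulV, mulg1. reflexivity. Qed.

Lemma invgK (x : A) : ginv (ginv x) = x.
Proof. symmetry. apply inv_uniq. apply gmulV. Qed.

Lemma invMg (x y : A) : ginv (gmul x y) = gmul (ginv y) (ginv x).
Proof.
  symmetry. apply inv_uniq. rewrite !gmulA, mulgKV, mulgV. reflexivity.
Qed.

Lemma inv1 : ginv (@gone A) = gone.
Proof. symmetry. apply inv_uniq. apply gmul1. Qed.
End G.

Lemma hom_one {A B : group} (f : A -> B) (Hf : is_hom A B f) : f gone = gone.
Proof. apply mulg_idem_one. rewrite <- Hf, gmul1. reflexivity. Qed.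

Lemma hom_inv {A B : group} (f : A -> B) (Hf : is_hom A B f) (x : A) :
  f (ginv x) = ginv (f x).
Proof. apply inv_uniq. rewrite <- Hf, mulgV, (hom_one f Hf). reflexivity. Qed.

Ltac gsimpl := repeat progress (rewrite ?invMg, ?invgK, ?inv1, ?gmulA, ?mulgKV, ?mulgVK,
  ?mulgV, ?gmulV, ?gmul1, ?mulg1).

Lemma tconj_refl {A : group} psi (Hpsi : is_hom A A psi) x : tconj A psi x x.
Proof. exists gone. rewrite (hom_one psi Hpsi). gsimpl. reflexivity. Qed.

Lemma tconj_sym {A : group} psi (Hpsi : is_hom A A psi) x y :
  tconj A psi x y -> tconj A psi y x.
Proof.
  intros [g Hg]. exists (ginv g). subst x. rewrite (hom_inv psi Hpsi). gsimpl. reflexivity.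
Qed.

Lemma tconj_trans {A : group} psi (Hpsi : is_hom A A psi) x y z :
  tconj A psi x y -> tconj A psi y z -> tconj A psi x z.
Proof.
  intros [g Hg] [g' Hg']. exists (gmul g g'). subst. rewrite Hpsi. gsimpl. reflexivity.
Qed.

Lemma FOP_app_inv {T} (R : T -> T -> Prop) p s :
  ForallOrdPairs R (p ++ s) ->
  ForallOrdPairs R p /\ ForallOrdPairs R s /\ (forall x y, In x p -> In y s -> R x y).
Proof.
  induction p as [|a p IH]; simpl; intros Hf.
  - split; [constructor|split; [exact Hf| intros x y []]].
  - inversion Hf as [|a' l' Hfa Hfl]; subst.
    destruct (IH Hfl) as [H1 [H2 H3]].
    rewrite Forall_forall in Hfa.
    split; [constructor; [rewrite Forall_forall; intros y Hy; apply Hfa; apply in_or_app; left; exact Hy | exact H1] | split; [exact H2|]].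
    intros x y [<-|Hx] Hy; [apply Hfa; apply in_or_app; right; exact Hy | apply H3; assumption].
Qed.

Lemma FOP_app {T} (R : T -> T -> Prop) p s :
  ForallOrdPairs R p -> ForallOrdPairs R s -> (forall x y, In x p -> In y s -> R x y) ->
  ForallOrdPairs R (p ++ s).
Proof.
  induction p as [|a p IH]; simpl; intros Hp Hs Hc; [exact Hs|].
  inversion Hp as [|a' l' Hpa Hpl]; subst.
  constructor.
  - rewrite Forall_forall in *. intros y Hy. apply in_app_or in Hy as [Hy|Hy];
      [apply Hpa; exact Hy | apply Hc; [left; reflexivity | exact Hy]].
  - apply IH; [exact Hpl|exact Hs|]. intros x y Hx Hy; apply Hc; [right; exact Hx | exact Hy].
Qed.

Lemma FOP_map {T U} (R : U -> U -> Prop) (R' : T -> T -> Prop) (g : T -> U) l :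
  (forall a b, R' a b -> R (g a) (g b)) -> ForallOrdPairs R' l -> ForallOrdPairs R (map g l).
Proof.
  intros HR. induction 1 as [|a l Ha Hl IH]; simpl; constructor; auto.
  rewrite Forall_forall in *. intros y Hy. apply in_map_iff in Hy as [x [<- Hx]]. auto.
Qed.

Section Eq.
Context {T : Type} (E : T -> T -> Prop).
Hypothesis Erefl : forall x, E x x.
Hypothesis Esym : forall x y, E x y -> E y x.
Hypothesis Etrans : forall x y z, E x y -> E y z -> E x z.

Lemma classes_le : forall l2 l1, ForallOrdPairs (fun a b => ~ E a b) l1 ->
    (forall a, In a l1 -> exists b, In b l2 /\ E a b) -> length l1 <= length l2.
Proof.
  induction l2 as [|b l2 IH]; intros l1 Hf Hc.
  - destruct l1 as [|a l1]; [simpl; lia|].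
    destruct (Hc a (or_introl eq_refl)) as [b [[] _]].
  - destruct (classic (exists a, In a l1 /\ E a b)) as [[a [Ha Hab]]|Hn].
    + apply in_split in Ha as [p [s ->]].
      apply FOP_app_inv in Hf as [Hp [Hs Hps]].
      inversion Hs as [|a' s' Has Hss]; subst.
      rewrite Forall_forall in Has.
      assert (length (p ++ s) <= length l2).
      { apply IH.
        - apply FOP_app; auto. intros x y Hx Hy; apply Hps; [exact Hx| right; exact Hy].
        - intros c Hcin.
          assert (Hcin2 : In c (p ++ a :: s)).
          { apply in_app_or in Hcin as [Hcin|Hcin]; apply in_or_app; [left|right; right]; exact Hcin. }
          destruct (Hc c Hcin2) as [b' [[<-|Hb'] Hcb']].
          + exfalso. apply in_app_or in Hcin as [Hcin|Hcin].
            * apply (Hps c a Hcin (or_introl eq_refl)). eapply Etrans; [exact Hcb'| apply Esym; exact Hab].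
            * apply (Has c Hcin). eapply Etrans; [exact Hab | apply Esym; exact Hcb'].
          + exists b'; split; assumption. }
      rewrite !length_app in *. simpl. lia.
    + assert (length l1 <= length l2); [|simpl; lia].
      apply IH; auto. intros a Ha. destruct (Hc a Ha) as [b' [[<-|Hb'] Hab']].
      * exfalso; apply Hn; exists a; auto.
      * exists b'; auto.
Qed.

Lemma cover_dedup : forall L : list T, exists l, ForallOrdPairs (fun a b => ~ E a b) l /\
    (forall y, In y L -> exists z, In z l /\ E y z).
Proof.
  induction L as [|b L IH].
  - exists nil; split; [constructor| intros y []].
  - destruct IH as [l [Hf Hc]].
    destruct (classic (exists z, In z l /\ E b z)) as [Hb|Hn].
    + exists l; split; auto. intros y [<-|Hy]; auto.
    + exists (b :: l); split.
      * constructor; auto. rewrite Forall_forall. intros z Hz Hbz; apply Hn; eauto.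
      * intros y [<-|Hy].
        -- exists b; split; [left; reflexivity| apply Erefl].
        -- destruct (Hc y Hy) as [z [Hz Hyz]]; exists z; split; [right|]; auto.
Qed.

Lemma has_n_unique n m : has_n_classes T E n -> has_n_classes T E m -> n = m.
Proof.
  intros [l1 [<- [F1 C1]]] [l2 [<- [F2 C2]]].
  apply Nat.le_antisymm; apply classes_le; auto.
  all: intros a _; first [destruct (C2 a) as [b [Hb Hab]] | destruct (C1 a) as [b [Hb Hab]]]; eauto.
Qed.

Lemma nclasses_fin n : has_n_classes T E n -> nclasses T E = Fin n.
Proof.
  intros Hn. unfold nclasses.
  destruct (excluded_middle_informative _) as [h|h].
  - destruct (constructive_indefinite_description _ h) as [m Hm]; simpl.
    f_equal. eapply has_n_unique; eauto.
  - exfalso; apply h; eauto.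
Qed.

Lemma nclasses_inf : (forall n, ~ has_n_classes T E n) -> nclasses T E = Inf.
Proof.
  intros Hn. unfold nclasses.
  destruct (excluded_middle_informative _) as [h|h]; [|reflexivity].
  exfalso; destruct h as [m Hm]; eapply Hn; eauto.
Qed.

Lemma cover_finite : (exists L, forall x, exists y, In y L /\ E x y) ->
  exists n, has_n_classes T E n.
Proof.
  intros [L HL]. destruct (cover_dedup L) as [l [Hf Hc]].
  exists (length l), l. split; [reflexivity| split; [exact Hf|]].
  intros x. destruct (HL x) as [y [Hy Hxy]]. destruct (Hc y Hy) as [z [Hz Hyz]].
  exists z; split; eauto.
Qed.
End Eq.

Lemma nclasses_Fin_spec {T} (E : T -> T -> Prop) n :
  nclasses T E = Fin n -> has_n_classes T E n.
Proof.
  unfold nclasses. destruct (excluded_middle_informative _) as [h|h]; [|discriminate].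
  destruct (constructive_indefinite_description _ h) as [m Hm]; simpl.
  intros Heq; inversion Heq; subst; exact Hm.
Qed.

Lemma nclasses_Inf_spec {T} (E : T -> T -> Prop) :
  nclasses T E = Inf -> forall n, ~ has_n_classes T E n.
Proof.
  unfold nclasses. destruct (excluded_middle_informative _) as [h|h]; [discriminate|].
  intros _ n Hn; apply h; exists n; exact Hn.
Qed.

Lemma nodup_cover {T} (l : list T) : exists l', NoDup l' /\ forall x, In x l -> In x l'.
Proof.
  induction l as [|a l IH]; [exists nil; split; [constructor| intros x []]|].
  destruct IH as [l' [Hnd Hin]]. destruct (classic (In a l')) as [Ha|Ha].
  - exists l'; split; auto; intros x [<-|Hx]; auto.
  - exists (a :: l'); split; [constructor; auto| intros x [<-|Hx]; [left; reflexivity | right; auto]].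
Qed.

Section Count.
Variables (X H J : Type) (E : X -> X -> Prop) (Ej : J -> H -> H -> Prop) (f : J -> H -> X) (h0 : H).
Hypothesis Erefl : forall x, E x x.
Hypothesis Esym : forall x y, E x y -> E y x.
Hypothesis Etrans : forall x y z, E x y -> E y z -> E x z.
Hypothesis hA : forall x, exists j h, E x (f j h).
Hypothesis hB : forall i j h h', E (f i h) (f j h') -> i = j.
Hypothesis hC : forall j h h', Ej j h h' <-> E (f j h) (f j h').

Lemma Ej_refl j h : Ej j h h. Proof. apply hC, Erefl. Qed.
Lemma Ej_sym j h h' : Ej j h h' -> Ej j h' h. Proof. rewrite !hC; auto. Qed.
Lemma Ej_trans j a b c : Ej j a b -> Ej j b c -> Ej j a c.
Proof. rewrite !hC; eauto. Qed.

Lemma build_list : forall lj, NoDup lj -> (forall j, nclasses H (Ej j) <> Inf) ->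
  exists L, length L = fold_right (fun j s => efin (nclasses H (Ej j)) + s) 0 lj /\
    ForallOrdPairs (fun a b => ~ E a b) L /\
    (forall j h, In j lj -> exists y, In y L /\ E (f j h) y) /\
    (forall y, In y L -> exists j h, In j lj /\ y = f j h).
Proof.
  induction lj as [|j lj IH]; intros Hnd Hfin.
  - exists nil; simpl. split; [reflexivity|split; [constructor|split]].
    + intros j h [].
    + intros y [].
  - inversion Hnd as [|j' lj' Hnin Hnd']; subst.
    destruct (IH Hnd' Hfin) as [L [HL1 [HL2 [HL3 HL4]]]].
    assert (Hn : exists n, nclasses H (Ej j) = Fin n).
    { destruct (nclasses H (Ej j)) eqn:Hr; [eauto| exfalso; apply (Hfin j Hr)]. }
    destruct Hn as [n Hn]. simpl. rewrite Hn. simpl.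
    apply nclasses_Fin_spec in Hn as [lh [Hlen [Hf Hc]]].
    exists (map (f j) lh ++ L).
    split; [rewrite length_app, length_map, Hlen, HL1; reflexivity|].
    split.
    { apply FOP_app; auto.
      - apply (FOP_map _ (fun a b => ~ Ej j a b)); auto.
        intros a b Hab HE; apply Hab, hC, HE.
      - intros x y Hx Hy. apply in_map_iff in Hx as [a [<- Ha]].
        destruct (HL4 y Hy) as [j2 [b [Hj2 ->]]].
        intros HE. apply hB in HE. subst j2. contradiction. }
    split.
    { intros j0 h [<-|Hj0].
      - destruct (Hc h) as [y [Hy Hhy]]. exists (f j y); split.
        + apply in_or_app; left; apply in_map; auto.
        + apply hC; auto.
      - destruct (HL3 j0 h Hj0) as [y [Hy Hhy]]. exists y; split; auto.
        apply in_or_app; right; auto. }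
    intros y Hy; apply in_app_or in Hy as [Hy|Hy].
    + apply in_map_iff in Hy as [x [<- Hx]]. exists j, x; split; [left|]; reflexivity.
    + destruct (HL4 y Hy) as [j2 [b [Hj2 ->]]]. exists j2, b; split; [right|]; auto.
Qed.

Lemma list_J : forall L : list X, exists lj, forall j h, (exists y, In y L /\ E (f j h) y) -> In j lj.
Proof.
  induction L as [|y L IH].
  - exists nil; intros j h [y [[] _]].
  - destruct IH as [lj Hlj]. destruct (hA y) as [j0 [h1 Hy]]. exists (j0 :: lj).
    intros j h [y' [[<-|Hy'] HE]].
    + left. symmetry. eapply hB. eapply Etrans; eauto.
    + right; apply Hlj with h; eauto.
Qed.

Lemma list_H j : forall L : list X, exists lh, forall h,
  (exists y, In y L /\ E (f j h) y) -> exists h', In h' lh /\ Ej j h h'.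
Proof.
  induction L as [|y L IH]; [exists nil; intros h [y [[] _]]|].
  destruct IH as [lh Hlh]. destruct (classic (exists h1, E y (f j h1))) as [[h1 Hh1]|Hn].
  - exists (h1 :: lh). intros h [y' [[<-|Hy'] HE]].
    + exists h1; split; [left; reflexivity| apply hC; eapply Etrans; eauto].
    + destruct (Hlh h) as [h' [Hh' Hhh']]; eauto. exists h'; split; [right|]; auto.
  - exists lh. intros h [y' [[<-|Hy'] HE]].
    + exfalso; apply Hn; exists h; apply Esym; exact HE.
    + apply Hlh; eauto.
Qed.

Theorem count : nclasses X E = esum J (fun j => nclasses H (Ej j)).
Proof.
  unfold esum. destruct (excluded_middle_informative _) as [hf|hnf].
  - cbv zeta.
    destruct (constructive_indefinite_description _ (proj1 hf)) as [lj [Hnd Hall]]. simpl.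
    destruct (build_list lj Hnd (proj2 hf)) as [L [HL1 [HL2 [HL3 HL4]]]].
    apply nclasses_fin; auto. exists L. split; [exact HL1|split; [exact HL2|]].
    intros x. destruct (hA x) as [j [h Hx]]. destruct (HL3 j h (Hall j)) as [y [Hy Hhy]].
    exists y; split; eauto.
  - apply nclasses_inf. intros n [L [_ [_ HL]]]. apply hnf. split.
    + destruct (list_J L) as [lj Hlj]. destruct (nodup_cover lj) as [l' [Hnd Hin]].
      exists l'; split; auto. intros j. apply Hin. apply (Hlj j h0). apply HL.
    + intros j Hinf.
      destruct (list_H j L) as [lh Hlh].
      destruct (cover_finite (Ej j) (Ej_refl j) (Ej_sym j) (Ej_trans j)) as [m Hm].
      * exists lh. intros h. apply Hlh. apply HL.
      * eapply nclasses_Inf_spec; eauto.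
Qed.
End Count.


Theorem mainTheorem9
  (H K : group)
  (alpha : gcar H -> gcar H) (beta : gcar K -> gcar H) (delta : gcar K -> gcar K)
  (halpha : is_hom H H alpha) (hbeta : is_hom K H beta) (hdelta : is_hom K K delta)
  (hcomm : forall (h : gcar H) (k : gcar K),
             gmul (alpha h) (beta k) = gmul (beta k) (alpha h))
  (J : Type) (kj : J -> gcar K)
  (hrep_cover : forall k : gcar K, exists j : J, tconj K delta k (kj j))
  (hrep_distinct : forall i j : J, tconj K delta (kj i) (kj j) -> i = j) :
  let phi : gcar (prod_group H K) -> gcar (prod_group H K) :=
    fun x => (gmul (alpha (fst x)) (beta (snd x)), delta (snd x)) in
  (* r_j : number of orbits of Stab_delta(k_j) acting on R[alpha] by
     ([h]_alpha, y) |-> [h beta(y)]_alpha; orbits are described on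
     representatives h : H via  h ~ h'  iff  [h'] = [h beta(y)] for some y *)
  let r : J -> enat := fun j =>
    nclasses (gcar H) (fun h h' : gcar H =>
      exists y : gcar K, tstab K delta (kj j) y /\
                         tconj H alpha h' (gmul h (beta y))) in
  reidemeister (prod_group H K) phi = esum J r.
Proof.
  intros phi r.
  assert (Hphi : is_hom (prod_group H K) (prod_group H K) phi).
  { intros [x1 x2] [y1 y2]. unfold phi. simpl. unfold pmul. simpl.
    rewrite halpha, hbeta, hdelta. f_equal. gsimpl.
    rewrite <- (gmulA _ (alpha x1) (alpha y1) (beta x2)), hcomm. gsimpl. reflexivity. }
  assert (Hprod : forall h k h' k', tconj (prod_group H K) phi (h, k) (h', k') <->
    exists g1 g2, h = gmul (gmul g1 h') (ginv (gmul (alpha g1) (beta g2))) /\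
                  k = gmul (gmul g2 k') (ginv (delta g2))).
  { intros h k h' k'. split.
    - intros [[g1 g2] Hg]. unfold phi in Hg. simpl in Hg. unfold pmul, pinv in Hg. simpl in Hg.
      injection Hg as Hh Hk. exists g1, g2; split; assumption.
    - intros [g1 [g2 [Hh Hk]]]. exists (g1, g2). unfold phi. simpl. unfold pmul, pinv. simpl.
      rewrite <- Hh, <- Hk. reflexivity. }
  unfold reidemeister, r.
  apply (count (gcar H * gcar K) (gcar H) J (tconj (prod_group H K) phi) _
           (fun j h => (h, kj j)) gone).
  - apply (tconj_refl phi Hphi).
  - apply (tconj_sym phi Hphi).
  - apply (tconj_trans phi Hphi).
  - intros [h k]. destruct (hrep_cover k) as [j [l Hl]].
    exists j, (gmul h (beta l)). apply Hprod. exists gone, l. split; [|exact Hl].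
    rewrite (hom_one alpha halpha). gsimpl. reflexivity.
  - intros i j h h' Hx. apply Hprod in Hx as [g1 [g2 [_ Hk]]].
    apply hrep_distinct. exists g2. exact Hk.
  - intros j h h'. split.
    + intros [y [Hy [g Hg]]]. apply Hprod. exists (ginv g), y. split; [|exact Hy].
      subst h'. rewrite (hcomm (ginv g) y), (hom_inv alpha halpha). gsimpl. reflexivity.
    + intros Hx. apply Hprod in Hx as [g1 [g2 [Hh Hk]]].
      exists g2; split; [exact Hk|]. exists (ginv g1). subst h.
      rewrite (hcomm g1 g2), (hom_inv alpha halpha). gsimpl. reflexivity.
Qed.
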